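(* Let $f$ be a critically coalescing quadratic rational map with critical values $v_1,v_2$. Set $\beta_j=f^j(v_1)$ for $j\ge1$ (so $\beta_1=f(v_1)=f(v_2)$), and suppose that the forward orbit of $v_1$ contains a fixed point $\alpha$ of $f$; let $m$ be minimal with $f^m(v_1)=\alpha$, and assume $m>2$. Let $k>m$. Then, counting critical points of $f^k$ lying in fibers $f^{-k}(z)$: (i) $f^{-k}(z)$ contains exactly $2^{k-1}$ critical points of $f^k$ if and only if $z\in\{v_1,v_2,\beta_1\}$; (ii) for each $2\le j\le m-1$, $f^{-k}(\beta_j)$ contains exactly $2^{k-j}$ critical points of $f^k$; (iii) $f^{-k}(\alpha)$ contains exactly $2^{k-(m-1)}-2$ critical points of $f^k$.
   Context: A quadratic rational map with critical values $v_1\ne v_2$ is critically coalescing if $f(v_1)=f(v_2)$. $f^k$ denotes the $k$-th iterate and $f^{-k}(z)$ the full preimage of $z$ under $f^k$. *)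

(* Defs.v *)
From HB Require Import structures.
From mathcomp Require Import all_boot all_order all_algebra.
From mathcomp Require Import complex.
From mathcomp Require Import reals.
Set Implicit Arguments. Unset Strict Implicit. Unset Printing Implicit Defensive.
Import Order.TTheory GRing.Theory Num.Theory.
Local Open Scope ring_scope.

Section Sphere.
Variable C : fieldType.

(* Points of the projective line P^1(C): Some x = x, None = infinity. *)
Definition sphere := option C.

Definition hcoord (z : sphere) : C * C :=
  match z with Some x => (x, 1) | None => (1, 0) end.

(* A rational map of degree d given by a pair of binary forms
   P(X,Y) = sum_{i<=d} p_i X^i Y^(d-i), Q(X,Y) = sum_{i<=d} q_i X^i Y^(d-i),
   encoded by the univariate polynomials p, q (dehomogenisations) and d. *)
Record hmap := HMap { hdeg : nat; hnum : {poly C}; hden : {poly C} }.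

Definition hform (d : nat) (p : {poly C}) (a b : C) : C :=
  \sum_(i < d.+1) p`_i * a ^+ i * b ^+ (d - i).
Definition hform_dX (d : nat) (p : {poly C}) (a b : C) : C :=
  \sum_(i < d.+1) (p`_i *+ i) * a ^+ i.-1 * b ^+ (d - i).
Definition hform_dY (d : nat) (p : {poly C}) (a b : C) : C :=
  \sum_(i < d.+1) (p`_i *+ (d - i)) * a ^+ i * b ^+ (d - i).-1.

Definition is_ratmap (f : hmap) : Prop :=
  [/\ (size (hnum f) <= (hdeg f).+1)%N, (size (hden f) <= (hdeg f).+1)%N &
      forall z : sphere,
        (hform (hdeg f) (hnum f) (hcoord z).1 (hcoord z).2,
         hform (hdeg f) (hden f) (hcoord z).1 (hcoord z).2) <> (0, 0)].

Definition is_quadratic (f : hmap) : Prop := hdeg f = 2%N /\ is_ratmap f.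

Definition heval (f : hmap) (z : sphere) : sphere :=
  let a := (hcoord z).1 in let b := (hcoord z).2 in
  let A := hform (hdeg f) (hnum f) a b in
  let B := hform (hdeg f) (hden f) a b in
  if B == 0 then None else Some (A / B).

(* z is a critical point of f: the Jacobian determinant of the homogeneous
   lift (P,Q) vanishes at the homogeneous coordinates of z. *)
Definition critical (f : hmap) (z : sphere) : Prop :=
  let a := (hcoord z).1 in let b := (hcoord z).2 in
  let d := hdeg f in
  hform_dX d (hnum f) a b * hform_dY d (hden f) a b
  - hform_dY d (hnum f) a b * hform_dX d (hden f) a b = 0.

(* Composition f o g of homogeneous lifts: (P(R,S), Q(R,S)). *)
Definition hcomp (f g : hmap) : hmap :=
  HMap (hdeg f * hdeg g)
    (\sum_(i < (hdeg f).+1) (hnum f)`_i *: (hnum g ^+ i * hden g ^+ (hdeg f - i)))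
    (\sum_(i < (hdeg f).+1) (hden f)`_i *: (hnum g ^+ i * hden g ^+ (hdeg f - i))).

Definition hid : hmap := HMap 1 'X 1.

Definition hiter (k : nat) (f : hmap) : hmap := iter k (hcomp f) hid.

End Sphere.

Definition has_exactly (T : eqType) (n : nat) (P : T -> Prop) : Prop :=
  exists s : seq T, [/\ uniq s, size s = n & forall x, P x <-> x \in s].

(* Main.v *)
Require Import Defs.
From HB Require Import structures.
From mathcomp Require Import all_boot all_order all_algebra.
From mathcomp Require Import complex.
From mathcomp Require Import reals.
Import Order.TTheory GRing.Theory Num.Theory.
Local Open Scope ring_scope.
From mathcomp Require Import ring zify.

Set Implicit Arguments. Unset Strict Implicit. Unset Printing Implicit Defensive.

Section Forms.
Variable C : fieldType.
Implicit Types (p q R S U V : {poly C}) (a b : C).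

Lemma hform0 n a b : hform n (0 : {poly C}) a b = 0.
Proof. by rewrite /hform big1 // => i _; rewrite coef0 !mul0r. Qed.

Lemma hformD n p q a b : hform n (p + q) a b = hform n p a b + hform n q a b.
Proof. by rewrite /hform -big_split /=; apply: eq_bigr => i _; rewrite coefD !mulrDl. Qed.

Lemma hformZ n c p a b : hform n (c *: p) a b = c * hform n p a b.
Proof. by rewrite /hform mulr_sumr; apply: eq_bigr => i _; rewrite coefZ !mulrA. Qed.

Lemma hformN n p a b : hform n (- p) a b = - hform n p a b.
Proof. by rewrite -scaleN1r hformZ mulN1r. Qed.

Lemma hformB n p q a b : hform n (p - q) a b = hform n p a b - hform n q a b.
Proof. by rewrite hformD hformN. Qed.

Lemma hform_sum n I (r : seq I) (P : pred I) (F : I -> {poly C}) a b :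
  hform n (\sum_(i <- r | P i) F i) a b = \sum_(i <- r | P i) hform n (F i) a b.
Proof.
by apply: (big_morph (fun p => hform n p a b)) => [x y|]; rewrite ?hformD ?hform0.
Qed.

Lemma hformXn n i a b : (i <= n)%N -> hform n 'X^i a b = a ^+ i * b ^+ (n - i).
Proof.
move=> hi; rewrite /hform (bigD1 (Ordinal (hi : (i < n.+1)%N))) //= big1 ?addr0.
  by rewrite coefXn eqxx mul1r.
by move=> j /eqP hj; rewrite coefXn; case: eqP => // hji; [case: hj; apply: val_inj|rewrite !mul0r].
Qed.

Lemma hform_expand n p a b : (size p <= n.+1)%N ->
  hform n p a b = \sum_(i < size p) p`_i * (a ^+ i * b ^+ (n - i)).
Proof.
move=> hs; rewrite -{1}[p]coefK poly_def hform_sum; apply: eq_bigr => i _.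
by rewrite hformZ hformXn //; have := ltn_ord i; lia.
Qed.

Lemma hformM n1 n2 U V a b : (size U <= n1.+1)%N -> (size V <= n2.+1)%N ->
  hform (n1 + n2) (U * V) a b = hform n1 U a b * hform n2 V a b.
Proof.
move=> hU hV; rewrite (hform_expand _ _ hU) (hform_expand _ _ hV).
rewrite -{1}[U]coefK -{1}[V]coefK !poly_def mulr_suml hform_sum mulr_suml.
apply: eq_bigr => i _; rewrite mulr_sumr hform_sum mulr_sumr; apply: eq_bigr => j _.
rewrite -scalerAl -scalerAr scalerA -exprD hformZ hformXn; last first.
  by have := ltn_ord i; have := ltn_ord j; lia.
have -> : (n1 + n2 - (i + j) = (n1 - i) + (n2 - j))%N.
  by have := ltn_ord i; have := ltn_ord j; lia.
rewrite !exprD; ring.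
Qed.

Lemma size_sum_le n I (r : seq I) (P : pred I) (F : I -> {poly C}) :
  (forall i, P i -> (size (F i) <= n)%N) -> (size (\sum_(i <- r | P i) F i)%R <= n)%N.
Proof.
move=> h; apply: (big_ind (fun p : {poly C} => size p <= n)%N) => //.
  by rewrite size_poly0.
by move=> x y hx hy; apply: leq_trans (size_polyD _ _) _; rewrite geq_max hx hy.
Qed.

Lemma size_exp_le n i U : (size U <= n.+1)%N -> (size (U ^+ i)%R <= (n * i).+1)%N.
Proof.
move=> hU; apply: leq_trans (size_poly_exp_leq _ _) _.
by rewrite ltnS leq_mul2r; apply/orP; right; rewrite -ltnS; case: (size U) hU.
Qed.

Lemma size_mul_le n1 n2 U V : (size U <= n1.+1)%N -> (size V <= n2.+1)%N ->
  (size (U * V)%R <= (n1 + n2).+1)%N.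
Proof.
move=> hU hV; apply: leq_trans (size_polyMleq _ _) _.
case: (size U) hU => [|u] hU; case: (size V) hV => [|v] hV //=; lia.
Qed.

Lemma hformX n i U a b : (size U <= n.+1)%N ->
  hform (n * i) (U ^+ i) a b = hform n U a b ^+ i.
Proof.
move=> hU; elim: i => [|i IH].
  rewrite expr0 muln0 /hform big_ord1 coef1 /= !expr0 !mulr1 //.
by rewrite exprSr mulnSr hformM ?IH ?exprSr // size_exp_le.
Qed.

Definition hformP n q R S : {poly C} :=
  \sum_(i < n.+1) q`_i *: (R ^+ i * S ^+ (n - i)).

Lemma size_hformP n q dg R S : (size R <= dg.+1)%N -> (size S <= dg.+1)%N ->
  (size (hformP n q R S) <= (n * dg).+1)%N.
Proof.
move=> hR hS; apply: size_sum_le => i _; apply: leq_trans (size_scale_leq _ _) _.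
have := size_mul_le (size_exp_le i hR) (size_exp_le (n - i) hS).
have -> : (dg * i + dg * (n - i) = n * dg)%N by have := ltn_ord i; nia.
by [].
Qed.

Lemma hform_comp n q dg R S a b : (size R <= dg.+1)%N -> (size S <= dg.+1)%N ->
  hform (n * dg) (hformP n q R S) a b =
  hform n q (hform dg R a b) (hform dg S a b).
Proof.
move=> hR hS; rewrite /hformP hform_sum [RHS]/hform; apply: eq_bigr => i _.
rewrite hformZ.
have -> : (n * dg = dg * i + dg * (n - i))%N by have := ltn_ord i; nia.
rewrite hformM ?size_exp_le // !hformX // mulrA //.
Qed.

Lemma hform_scale n p l a b : hform n p (l * a) (l * b) = l ^+ n * hform n p a b.
Proof.
rewrite /hform mulr_sumr; apply: eq_bigr => i _.
have hi : (i <= n)%N by rewrite -ltnS.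
rewrite !exprMn -[in l ^+ n](subnKC hi) exprD; ring.
Qed.


Lemma coefY d q i : (i <= d)%N -> (q *+ d - 'X * q^`())`_i = q`_i *+ (d - i).
Proof.
move=> hi; rewrite coefB coefMn coefXM; case: i hi => [|i] hi.
  by rewrite subr0 subn0.
by rewrite coef_deriv /= mulrnBr.
Qed.

Lemma hform_dXE d p a b : (0 < d)%N -> hform_dX d p a b = hform d.-1 p^`() a b.
Proof.
case: d => [//|d] _; rewrite /hform_dX /hform big_ord_recl /= mulr0n !mul0r add0r.
apply: eq_bigr => i _; rewrite coef_deriv /bump /= add1n subSS //.
Qed.

Lemma hform_dYE d p a b : (0 < d)%N ->
  hform_dY d p a b = hform d.-1 (p *+ d - 'X * p^`()) a b.
Proof.
case: d => [//|d] _; rewrite /hform_dY /hform big_ord_recr /= subnn mulr0n !mul0r addr0.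
apply: eq_bigr => i _; rewrite coefY /=; last by apply: ltnW.
have hi := ltn_ord i; congr (_ * _); congr (_ ^+ _); lia.
Qed.

Lemma size_deriv_le dg R : (size R <= dg.+1)%N -> (size R^`() <= dg)%N.
Proof.
move=> /leq_sizeP hR; apply/leq_sizeP => j hj; rewrite coef_deriv hR ?mul0rn //.
Qed.

Lemma size_Y_le dg R : (size R <= dg.+1)%N -> (size (R *+ dg - 'X * R^`())%R <= dg)%N.
Proof.
move=> /leq_sizeP hR; apply/leq_sizeP => j hj.
case: (ltngtP j dg) hj => // [hj|->] _.
  rewrite coefB coefMn coefXM hR // mul0rn; case: j hj => [//|j] hj.
  by rewrite coef_deriv /= hR // mul0rn subr0.
by rewrite coefY // subnn mulr0n.
Qed.

Lemma deriv_hformP n q R S : (0 < n)%N ->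
  (hformP n q R S)^`() = hformP n.-1 q^`() R S * R^`()
                         + hformP n.-1 (q *+ n - 'X * q^`()) R S * S^`().
Proof.
case: n => [//|n] _ /=; rewrite /hformP raddf_sum /=.
under eq_bigr => i _ do rewrite derivZ derivM !deriv_exp scalerDr.
rewrite big_split /= !mulr_suml; congr (_ + _).
  rewrite big_ord_recl /= mulr0n mul0r ?mul0r scaler0 add0r.
  apply: eq_bigr => i _; rewrite coef_deriv /bump /= add1n subSS.
  rewrite -!mul_polyC polyCMn; ring.
rewrite big_ord_recr /= subnn mulr0n mulr0 scaler0 addr0.
apply: eq_bigr => i _; rewrite coefY /=; last by apply: ltnW.
have hi := ltn_ord i.
have -> : ((n.+1 - i).-1 = n - i)%N by lia.
rewrite -!mul_polyC polyCMn; ring.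
Qed.

Lemma euler_hformP n q R S : (0 < n)%N ->
  hformP n q R S *+ n = hformP n.-1 q^`() R S * R
                        + hformP n.-1 (q *+ n - 'X * q^`()) R S * S.
Proof.
case: n => [//|n] _ /=; rewrite /hformP -sumrMnl !mulr_suml.
have -> : \sum_(i < n.+2) q`_i *: (R ^+ i * S ^+ (n.+1 - i)) *+ n.+1 =
  \sum_(i < n.+2) (q`_i *: (R ^+ i * S ^+ (n.+1 - i)) *+ i
                  + q`_i *: (R ^+ i * S ^+ (n.+1 - i)) *+ (n.+1 - i)).
  apply: eq_bigr => i _; rewrite -mulrnDr; congr (_ *+ _).
  by have := ltn_ord i; lia.
rewrite big_split /=; congr (_ + _).
  rewrite big_ord_recl /= mulr0n add0r.
  apply: eq_bigr => i _; rewrite coef_deriv /bump /= add1n subSS.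
  rewrite -!mul_polyC polyCMn exprSr; ring.
rewrite big_ord_recr /= subnn mulr0n addr0.
apply: eq_bigr => i _; rewrite coefY /=; last by apply: ltnW.
have hi := ltn_ord i.
have -> : (n.+1 - i = (n - i).+1)%N by lia.
rewrite -!mul_polyC polyCMn exprS; ring.
Qed.

End Forms.

Section Maps.
Variable C : fieldType.
Implicit Types (p q R S : {poly C}) (a b A B l : C) (f g : hmap C) (z : sphere C).

Lemma dX_comp df dg p R S a b : (0 < df)%N -> (0 < dg)%N ->
  (size R <= dg.+1)%N -> (size S <= dg.+1)%N ->
  hform_dX (df * dg) (hformP df p R S) a b =
  hform_dX df p (hform dg R a b) (hform dg S a b) * hform_dX dg R a b +
  hform_dY df p (hform dg R a b) (hform dg S a b) * hform_dX dg S a b.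
Proof.
case: df => [//|df] _; case: dg => [//|dg] _ hR hS.
rewrite hform_dXE // deriv_hformP // hformD.
have -> : ((df.+1 * dg.+1).-1 = df * dg.+1 + dg)%N by rewrite mulSn /=; lia.
rewrite !hformM ?size_hformP ?size_deriv_le // !hform_comp //.
by rewrite !hform_dXE // hform_dYE.
Qed.

Lemma dY_comp df dg p R S a b : (0 < df)%N -> (0 < dg)%N ->
  (size R <= dg.+1)%N -> (size S <= dg.+1)%N ->
  hform_dY (df * dg) (hformP df p R S) a b =
  hform_dX df p (hform dg R a b) (hform dg S a b) * hform_dY dg R a b +
  hform_dY df p (hform dg R a b) (hform dg S a b) * hform_dY dg S a b.
Proof.
case: df => [//|df] _; case: dg => [//|dg] _ hR hS.
rewrite hform_dYE //.
have -> : hformP df.+1 p R S *+ (df.+1 * dg.+1) - 'X * (hformP df.+1 p R S)^`() =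
  hformP df p^`() R S * (R *+ dg.+1 - 'X * R^`()) +
  hformP df (p *+ df.+1 - 'X * p^`()) R S * (S *+ dg.+1 - 'X * S^`()).
  rewrite mulrnA euler_hformP // deriv_hformP //=.
  rewrite !mulrnDl -!mulrnAr; ring.
rewrite hformD.
have -> : ((df.+1 * dg.+1).-1 = df * dg.+1 + dg)%N by rewrite mulSn /=; lia.
rewrite !hformM ?size_hformP ?size_Y_le // !hform_comp //.
by rewrite !hform_dYE // hform_dXE.
Qed.

Definition Jac d p q a b :=
  hform_dX d p a b * hform_dY d q a b - hform_dY d p a b * hform_dX d q a b.

Lemma criticalE f z :
  critical f z <-> Jac (hdeg f) (hnum f) (hden f) (hcoord z).1 (hcoord z).2 = 0.
Proof. by []. Qed.

Definition szm g := (size (hnum g) <= (hdeg g).+1)%N /\ (size (hden g) <= (hdeg g).+1)%N.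

Lemma Jac_comp f g a b : (0 < hdeg f)%N -> (0 < hdeg g)%N -> szm g ->
  Jac (hdeg (hcomp f g)) (hnum (hcomp f g)) (hden (hcomp f g)) a b =
  Jac (hdeg f) (hnum f) (hden f) (hform (hdeg g) (hnum g) a b) (hform (hdeg g) (hden g) a b)
  * Jac (hdeg g) (hnum g) (hden g) a b.
Proof.
move=> hf hg [hR hS]; rewrite /Jac /=.
rewrite -!/(hformP _ _ _ _).
rewrite !dX_comp // !dY_comp //; ring.
Qed.

Lemma Jac_scale d p q l a b : (0 < d)%N ->
  Jac d p q (l * a) (l * b) = l ^+ (d.-1 + d.-1) * Jac d p q a b.
Proof.
move=> hd; rewrite /Jac !hform_dXE // !hform_dYE // !hform_scale exprD; ring.
Qed.

Definition pt A B : sphere C := if B == 0 then None else Some (A / B).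

Lemma pt_decomp A B : (A, B) <> (0, 0) ->
  exists l, l != 0 /\ A = l * (hcoord (pt A B)).1 /\ B = l * (hcoord (pt A B)).2.
Proof.
move=> hAB; rewrite /pt; case: eqP => hB /=.
  exists A; split; last by rewrite mulr1 mulr0.
  by apply/eqP => hA; apply: hAB; rewrite hA hB.
by exists B; split; [apply/eqP|rewrite mulr1 mulrC divfK //; apply/eqP].
Qed.

Lemma pt_mul l A B : l != 0 -> pt (l * A) (l * B) = pt A B.
Proof.
move=> hl; rewrite /pt mulf_eq0 (negbTE hl) /=; case: eqP => // hB.
by rewrite invfM mulrACA divff // mul1r.
Qed.

Lemma pt_hcoord z : pt (hcoord z).1 (hcoord z).2 = z.
Proof. by case: z => [x|] /=; rewrite /pt ?oner_eq0 ?eqxx ?divr1. Qed.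

Lemma hform_pt A B : (A, B) <> (0, 0) -> exists l, l != 0 /\
  forall n p, hform n p A B = l ^+ n * hform n p (hcoord (pt A B)).1 (hcoord (pt A B)).2.
Proof.
move=> /pt_decomp [l [hl [eA eB]]]; exists l; split => // n p.
by rewrite -hform_scale -eA -eB.
Qed.

Lemma Jac_pt d p q A B : (0 < d)%N -> (A, B) <> (0, 0) ->
  (Jac d p q A B = 0 <-> Jac d p q (hcoord (pt A B)).1 (hcoord (pt A B)).2 = 0).
Proof.
move=> hd /pt_decomp [l [hl [eA eB]]].
rewrite {1}eB {1}eA Jac_scale //; split => [/eqP|->]; last by rewrite mulr0.
by rewrite mulf_eq0 expf_eq0 (negbTE hl) andbF /= => /eqP.
Qed.

Definition nzm g := forall z,
  (hform (hdeg g) (hnum g) (hcoord z).1 (hcoord z).2,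
   hform (hdeg g) (hden g) (hcoord z).1 (hcoord z).2) <> (0, 0).

Lemma heval_pt f A B : (A, B) <> (0, 0) ->
  pt (hform (hdeg f) (hnum f) A B) (hform (hdeg f) (hden f) A B) = heval f (pt A B).
Proof.
move=> /hform_pt [l [hl hf]]; rewrite !hf pt_mul ?expf_neq0 //.
Qed.

Lemma comp_form f g z : szm g -> forall p,
  hform (hdeg f * hdeg g) (hformP (hdeg f) p (hnum g) (hden g)) (hcoord z).1 (hcoord z).2 =
  hform (hdeg f) p (hform (hdeg g) (hnum g) (hcoord z).1 (hcoord z).2)
                   (hform (hdeg g) (hden g) (hcoord z).1 (hcoord z).2).
Proof. by move=> [hR hS] p; rewrite hform_comp. Qed.

Lemma heval_comp f g z : szm g -> nzm g ->
  heval (hcomp f g) z = heval f (heval g z).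
Proof.
move=> hs hn; rewrite /heval /= -!/(hformP _ _ _ _) !comp_form //.
by rewrite -!/(pt _ _) heval_pt.
Qed.

Lemma nzm_comp f g : szm g -> nzm g -> nzm f -> nzm (hcomp f g).
Proof.
move=> hs hn hf z /=; rewrite -!/(hformP _ _ _ _) !comp_form //.
have [l [hl e]] := hform_pt (hn z); rewrite !e => [[/eqP h1 /eqP h2]].
apply: (hf (pt (hform (hdeg g) (hnum g) (hcoord z).1 (hcoord z).2)
               (hform (hdeg g) (hden g) (hcoord z).1 (hcoord z).2))).
move: h1 h2; rewrite !mulf_eq0 !expf_eq0 (negbTE hl) !andbF /= => /eqP -> /eqP -> //.
Qed.

Lemma szm_comp f g : szm f -> szm g -> szm (hcomp f g).
Proof.
move=> _ [hR hS] /=; rewrite -!/(hformP _ _ _ _).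
by split; apply: size_hformP.
Qed.

Lemma critical_comp f g z : (0 < hdeg f)%N -> (0 < hdeg g)%N -> szm g -> nzm g ->
  critical (hcomp f g) z <-> critical f (heval g z) \/ critical g z.
Proof.
move=> hf hg hs hn; rewrite !criticalE Jac_comp //.
rewrite /heval -!/(pt _ _) -Jac_pt //.
split; first by move/eqP; rewrite mulf_eq0 => /orP [/eqP|/eqP]; auto.
by case=> ->; rewrite ?mul0r ?mulr0.
Qed.

End Maps.

Section Iter.
Variable C : fieldType.
Variable f : hmap C.
Hypotheses (hd : (0 < hdeg f)%N) (hs : szm f) (hn : nzm f).

Lemma hform_hidX a b : hform 1 ('X : {poly C}) a b = a.
Proof. by rewrite -['X]expr1 hformXn // expr1 expr0 mulr1. Qed.
Lemma hform_hid1 a b : hform 1 (1 : {poly C}) a b = b.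
Proof. by rewrite -(expr0 ('X : {poly C})) hformXn // expr0 expr1 mul1r. Qed.
Lemma hform0_1 a b : hform 0 (1 : {poly C}) a b = 1.
Proof. by rewrite -(expr0 ('X : {poly C})) hformXn // !expr0 mulr1. Qed.

Lemma hdeg_iter k : hdeg (hiter k f) = (hdeg f ^ k)%N.
Proof. by elim: k => [//|k IH] /=; rewrite IH expnS. Qed.

Lemma hdeg_iter_gt0 k : (0 < hdeg (hiter k f))%N.
Proof. by rewrite hdeg_iter expn_gt0 hd. Qed.

Lemma iter_props k : szm (hiter k f) /\ nzm (hiter k f).
Proof.
elim: k => [|k [IH1 IH2]].
  split; first by rewrite /szm /= size_polyX size_poly1.
  move=> z /=; rewrite hform_hidX hform_hid1.
  by case: z => [x|] /= [] => [_ /eqP|/eqP]; rewrite oner_eq0.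
split; first exact: szm_comp.
exact: nzm_comp.
Qed.

Lemma heval_iter k z : heval (hiter k f) z = iter k (heval f) z.
Proof.
elim: k => [|k IH].
  by rewrite /heval /= hform_hidX hform_hid1 -/(pt _ _) pt_hcoord.
have [h1 h2] := iter_props k.
by rewrite /= heval_comp // IH.
Qed.

Lemma critical_iter k z : critical (hiter k f) z <->
  exists2 i, (i < k)%N & critical f (iter i (heval f) z).
Proof.
elim: k => [|k IH].
  split => [|[//]]; rewrite criticalE /Jac /= !hform_dXE // !hform_dYE //=.
  rewrite derivX -(expr0 ('X : {poly C})) derivXn /= mulr0n expr0 mulr1n.
  by rewrite mulr0 subr0 hform0 mulr0 subr0 hform0_1 mulr1 => /eqP; rewrite oner_eq0.
have [h1 h2] := iter_props k.
rewrite /= critical_comp ?hdeg_iter_gt0 // heval_iter IH.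
split.
  by case=> [h|[i hi h]]; [exists k|exists i => //; apply: ltnW].
case=> i; rewrite ltnS leq_eqVlt => /orP [/eqP ->|hi] h; [left|right] => //.
by exists i.
Qed.

End Iter.

Section Quad.
Variable C : numClosedFieldType.
Implicit Types (z x y w : sphere C) (A B a b : C).

Definition qf (l0 l1 l2 a b : C) := l0 * b ^+ 2 + l1 * a * b + l2 * a ^+ 2.

Lemma hform2 (p : {poly C}) a b : hform 2 p a b = qf p`_0 p`_1 p`_2 a b.
Proof. rewrite /hform /qf !big_ord_recr big_ord0 /=. ring. Qed.

Lemma hcoord_nz z : ((hcoord z).1, (hcoord z).2) <> (0, 0).
Proof. by case: z => [x|] /= [] => [_ /eqP|/eqP]; rewrite oner_eq0. Qed.

Lemma cross_pt A B x : (A, B) <> (0, 0) ->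
  ((hcoord x).1 * B - (hcoord x).2 * A = 0 <-> x = pt A B).
Proof.
move=> hAB; case: x => [y|] /=; rewrite /pt; case: eqP => hB.
- rewrite hB; split => // h; exfalso; apply: hAB; rewrite hB.
  by congr (_, _); apply/eqP; rewrite -oppr_eq0; apply/eqP; rewrite -h; ring.
- split => [h|[->]]; last by field; apply/eqP.
  have eA : A = y * B by apply/eqP; rewrite -subr_eq0; apply/eqP; rewrite -oppr0 -h; ring.
  by rewrite eA mulfK //; apply/eqP.
- by rewrite hB; split => // _; ring.
- by split => // h; exfalso; apply: hB; rewrite -h; ring.
Qed.

Lemma pt_eq A B A' B' : (A, B) <> (0, 0) -> (A', B') <> (0, 0) ->
  (pt A B = pt A' B' <-> A * B' - B * A' = 0).
Proof.
move=> h1 h2; have [l [hl [eA eB]]] := pt_decomp h1.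
move: eA eB; set w := pt A B; clearbody w => eA eB.
have e : A * B' - B * A' = l * ((hcoord w).1 * B' - (hcoord w).2 * A').
  by rewrite eA eB; ring.
rewrite e -cross_pt //; split => [->|/eqP]; first by rewrite mulr0.
by rewrite mulf_eq0 (negbTE hl) /= => /eqP.
Qed.

Lemma qf_zero l0 l1 l2 : exists z, qf l0 l1 l2 (hcoord z).1 (hcoord z).2 = 0.
Proof.
case: (eqVneq l2 0) => h2.
  by exists None; rewrite /qf /= h2; ring.
have [x hx] := @solve_monicpoly C 2 (fun i => if i == 0%N then - (l0 / l2) else - (l1 / l2)) isT.
rewrite !big_ord_recr big_ord0 /= in hx.
exists (Some x); rewrite /qf /= hx; field.
by [].
Qed.

Definition fu (l1 l2 : C) z := if z is Some x then l2 else - l1.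
Definition fw (l0 l1 l2 : C) z := if z is Some x then l1 + x * l2 else - l0.

Lemma qf_factor l0 l1 l2 z0 : qf l0 l1 l2 (hcoord z0).1 (hcoord z0).2 = 0 -> forall a b,
  qf l0 l1 l2 a b = ((hcoord z0).2 * a - (hcoord z0).1 * b) *
                    (fu l1 l2 z0 * a + fw l0 l1 l2 z0 * b).
Proof.
case: z0 => [x|] /= h a b; rewrite /qf in h *.
  have e0 : l0 = - (l1 * x + l2 * x ^+ 2).
    by apply/eqP; rewrite -subr_eq0; apply/eqP; rewrite -h; ring.
  rewrite e0; ring.
have e2 : l2 = 0 by rewrite -h; ring.
rewrite e2; ring.
Qed.

Lemma fuw_nz l0 l1 l2 z0 : qf l0 l1 l2 (hcoord z0).1 (hcoord z0).2 = 0 ->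
  ~ [/\ l0 = 0, l1 = 0 & l2 = 0] ->
  (fw l0 l1 l2 z0, - fu l1 l2 z0) <> (0, 0).
Proof.
case: z0 => [x|] /= h hn [e1 e2]; apply: hn; rewrite /qf in h.
  have e2' : l2 = 0 by apply/eqP; rewrite -oppr_eq0 e2.
  have e1' : l1 = 0 by rewrite -e1 e2'; ring.
  split => //; rewrite -h e1' e2'; ring.
have e1' : l1 = 0 by apply/eqP; rewrite -oppr_eq0 -[- l1]opprK e2 oppr0.
have e0' : l0 = 0 by apply/eqP; rewrite -oppr_eq0 e1.
split => //; rewrite -h e1' e0'; ring.
Qed.

Lemma qf_zeros l0 l1 l2 z0 : qf l0 l1 l2 (hcoord z0).1 (hcoord z0).2 = 0 ->
  ~ [/\ l0 = 0, l1 = 0 & l2 = 0] -> forall z,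
  (qf l0 l1 l2 (hcoord z).1 (hcoord z).2 = 0 <->
   z = z0 \/ z = pt (fw l0 l1 l2 z0) (- fu l1 l2 z0)).
Proof.
move=> h hn z; rewrite (qf_factor h); have hw := fuw_nz h hn.
split.
  move/eqP; rewrite mulf_eq0 => /orP [/eqP e|/eqP e]; [left|right].
    rewrite -(pt_hcoord z0); apply/cross_pt; first exact: hcoord_nz.
    by rewrite -e; ring.
  by apply/cross_pt => //; rewrite -oppr0 -e; ring.
case=> ->.
  have -> : (hcoord z0).2 * (hcoord z0).1 - (hcoord z0).1 * (hcoord z0).2 = 0 by ring.
  by rewrite mul0r.
move: (iffRL (cross_pt (pt (fw l0 l1 l2 z0) (- fu l1 l2 z0)) hw) erefl) => e.
set u := pt _ _ in e *.
have -> : fu l1 l2 z0 * (hcoord u).1 + fw l0 l1 l2 z0 * (hcoord u).2 = 0.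
  by rewrite -oppr0 -e; ring.
by rewrite mulr0.
Qed.

End Quad.

Section QuadMap.
Variable C : numClosedFieldType.
Variable f : hmap C.
Hypotheses (hdeg2 : hdeg f = 2%N) (hrat : is_ratmap f).
Implicit Types (z x y w : sphere C) (A B a b : C).

Local Notation p i := (hnum f)`_i.
Local Notation q i := (hden f)`_i.
Definition Pz z := qf (p 0) (p 1) (p 2) (hcoord z).1 (hcoord z).2.
Definition Qz z := qf (q 0) (q 1) (q 2) (hcoord z).1 (hcoord z).2.

Lemma PQ_nz z : (Pz z, Qz z) <> (0, 0).
Proof. by case: hrat => _ _ h; have := h z; rewrite hdeg2 !hform2. Qed.
Arguments PQ_nz : clear implicits.

Lemma hevalPQ z : heval f z = pt (Pz z) (Qz z).
Proof. by rewrite /heval hdeg2 !hform2. Qed.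

Lemma common_zero s t : (s, t) <> (0, 0) ->
  ~ [/\ s * p 0 = t * q 0, s * p 1 = t * q 1 & s * p 2 = t * q 2].
Proof.
move=> hst [e0 e1 e2].
have key : forall w, s * Pz w = t * Qz w.
  by move=> w; rewrite /Pz /Qz /qf; rewrite !mulrDr !mulrA e0 e1 e2.
case: (eqVneq s 0) => hs.
  have ht : t != 0 by apply/eqP => ht; apply: hst; rewrite hs ht.
  have [w hw] := qf_zero (p 0) (p 1) (p 2).
  apply: (PQ_nz w); congr (_, _) => //.
  by have := key w; rewrite hs mul0r => /esym/eqP; rewrite mulf_eq0 (negbTE ht) /= => /eqP.
have [w hw] := qf_zero (q 0) (q 1) (q 2).
apply: (PQ_nz w); congr (_, _) => //.
by have := key w; rewrite [Qz w]hw mulr0 => /eqP; rewrite mulf_eq0 (negbTE hs) /= => /eqP.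
Qed.

Definition l0z z := Qz z * p 0 - Pz z * q 0.
Definition l1z z := Qz z * p 1 - Pz z * q 1.
Definition l2z z := Qz z * p 2 - Pz z * q 2.
Definition sigf z := pt (fw (l0z z) (l1z z) (l2z z) z) (- fu (l1z z) (l2z z) z).

Lemma lz_nd z : ~ [/\ l0z z = 0, l1z z = 0 & l2z z = 0].
Proof.
move=> [e0 e1 e2]; apply: (@common_zero (Qz z) (Pz z)).
  by case=> h1 h2; apply: (PQ_nz z); rewrite h1 h2.
by split; apply/eqP; rewrite -subr_eq0; apply/eqP.
Qed.

Lemma lz_z z : qf (l0z z) (l1z z) (l2z z) (hcoord z).1 (hcoord z).2 = 0.
Proof. by rewrite /l0z /l1z /l2z /Pz /Qz /qf; ring. Qed.

Lemma fiberE x z : heval f x = heval f z <-> x = z \/ x = sigf z.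
Proof.
rewrite !hevalPQ pt_eq; try exact: PQ_nz.
have -> : Pz x * Qz z - Qz x * Pz z =
  qf (l0z z) (l1z z) (l2z z) (hcoord x).1 (hcoord x).2
  by rewrite /l0z /l1z /l2z /Pz /Qz /qf; ring.
exact: (qf_zeros (lz_z z) (@lz_nd z)).
Qed.

Lemma Jac2E a b : Jac 2 (hnum f) (hden f) a b =
  (p 1 * b + 2 * p 2 * a) * (2 * q 0 * b + q 1 * a) -
  (2 * p 0 * b + p 1 * a) * (q 1 * b + 2 * q 2 * a).
Proof.
rewrite /Jac !hform_dXE // !hform_dYE // /hform !big_ord_recr big_ord0 /=.
rewrite !big_ord0 !coef_deriv !coefY //= !subn0 !subnn (_ : (2 - 1 = 1)%N) //; ring.
Qed.

Lemma critical2 z : critical f z <->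
  Jac 2 (hnum f) (hden f) (hcoord z).1 (hcoord z).2 = 0.
Proof. by rewrite criticalE hdeg2. Qed.

Lemma two_nz : (2 : C) != 0.
Proof. by rewrite pnatr_eq0. Qed.

Lemma Jac_sig z : Jac 2 (hnum f) (hden f) (hcoord z).1 (hcoord z).2 =
  - 2 * ((hcoord z).1 * (- fu (l1z z) (l2z z) z) - (hcoord z).2 * fw (l0z z) (l1z z) (l2z z) z).
Proof. by rewrite Jac2E; case: z => [x|]; rewrite /l0z /l1z /l2z /Pz /Qz /qf /=; ring. Qed.

Lemma sig_fix z : sigf z = z <-> critical f z.
Proof.
have hw := fuw_nz (lz_z z) (@lz_nd z).
rewrite critical2 Jac_sig /sigf; split.
  by move=> e; rewrite (iffRL (cross_pt z hw) (esym e)) mulr0.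
move/eqP; rewrite mulf_eq0 oppr_eq0 (negbTE two_nz) /= => /eqP h.
by rewrite -(iffLR (cross_pt z hw) h).
Qed.

Lemma Jac_qf a b : Jac 2 (hnum f) (hden f) a b =
  qf (2 * (p 1 * q 0 - p 0 * q 1)) (2 * 2 * (p 2 * q 0 - p 0 * q 2)) (2 * (p 2 * q 1 - p 1 * q 2)) a b.
Proof. by rewrite Jac2E /qf; ring. Qed.

Lemma Jac_nd : ~ [/\ 2 * (p 1 * q 0 - p 0 * q 1) = 0, 2 * 2 * (p 2 * q 0 - p 0 * q 2) = 0
                  & 2 * (p 2 * q 1 - p 1 * q 2) = 0].
Proof.
have h2 := two_nz.
move=> [/eqP e0 /eqP e1 /eqP e2]; move: e0 e1 e2.
rewrite !mulf_eq0 (negbTE h2) /= !subr_eq0 => /eqP m01 /eqP m02 /eqP m12.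
case: (eqVneq (q 0) 0) => h0.
  case: (eqVneq (q 1) 0) => h1.
    case: (eqVneq (q 2) 0) => h2'.
      apply: (@common_zero 0 1); first by move/(congr1 snd) => /= /eqP; rewrite oner_eq0.
      by rewrite h0 h1 h2' !mul0r !mulr0.
    apply: (@common_zero (q 2) (p 2)); first by move=> [] /eqP; rewrite (negbTE h2').
    by split; [rewrite m02 mulrC|rewrite m12 mulrC|rewrite mulrC].
  apply: (@common_zero (q 1) (p 1)); first by move=> [] /eqP; rewrite (negbTE h1).
  by split; [rewrite m01 mulrC|rewrite mulrC|rewrite -m12 mulrC].
apply: (@common_zero (q 0) (p 0)); first by move=> [] /eqP; rewrite (negbTE h0).
by split; [rewrite mulrC|rewrite -m01 mulrC|rewrite -m02 mulrC].
Qed.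

Lemma crit_two c1 c2 z : c1 <> c2 -> critical f c1 -> critical f c2 -> critical f z ->
  z = c1 \/ z = c2.
Proof.
rewrite !critical2 !Jac_qf => hne h1 h2 hz.
have hz' := iffLR (qf_zeros h1 Jac_nd z) hz.
have := iffLR (qf_zeros h1 Jac_nd c2) h2.
case=> [e|->]; first by case: hne.
by case: hz' => ->; [left|right].
Qed.

Lemma surj y : exists x, heval f x = y.
Proof.
have [x hx] := qf_zero ((hcoord y).2 * p 0 - (hcoord y).1 * q 0)
  ((hcoord y).2 * p 1 - (hcoord y).1 * q 1) ((hcoord y).2 * p 2 - (hcoord y).1 * q 2).
exists x; rewrite hevalPQ -[RHS](pt_hcoord y).
apply/pt_eq; [exact: PQ_nz|exact: hcoord_nz|].
by rewrite -hx /Pz /Qz /qf; ring.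
Qed.

End QuadMap.

Local Close Scope ring_scope.

Lemma sum_single k i0 (c : nat -> nat) :
  \sum_(0 <= i < k) ((i == i0) * c i) = (i0 < k) * c i0.
Proof.
elim: k => [|k IH]; first by rewrite big_geq.
rewrite big_nat_recr //= IH ltnS.
by case: (ltngtP i0 k) => h /=; rewrite ?mul1n ?mul0n ?addn0 ?add0n ?h.
Qed.

Lemma sum_lt k n (c : nat -> nat) : n <= k ->
  \sum_(0 <= i < k) ((i < n) * c i) = \sum_(0 <= i < n) c i.
Proof.
elim: k => [|k IH] hn.
  by move: hn; rewrite leqn0 => /eqP ->; rewrite !big_geq.
rewrite big_nat_recr //=; case: (ltngtP n k.+1) hn => // h _.
  by rewrite IH ?mul0n ?addn0 // -ltnS.
rewrite h big_nat_recr //= mul1n; congr (_ + _).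
by apply: eq_big_nat => i /andP [_ hi]; rewrite ltnS ltnW // mul1n.
Qed.

Lemma sum_geom n : (\sum_(0 <= i < n) 2 ^ i).+1 = 2 ^ n.
Proof.
elim: n => [|n IH]; first by rewrite big_geq.
by rewrite big_nat_recr //= -addSn IH expnS; lia.
Qed.

Lemma flatten_uniq (S T : eqType) (s : seq S) (A : S -> seq T) :
  uniq s -> (forall w, w \in s -> uniq (A w)) ->
  (forall w w' x, w \in s -> w' \in s -> x \in A w -> x \in A w' -> w = w') ->
  uniq (flatten [seq A w | w <- s]).
Proof.
elim: s => [//|w s IH] /= /andP [hw hs] hu hd.
rewrite cat_uniq hu ?mem_head // IH //; last first.
- by move=> a b x ha hb; apply: hd; rewrite inE ?ha ?hb orbT.
- by move=> a ha; apply: hu; rewrite inE ha orbT.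
rewrite andbT; apply/hasPn => x /flatten_mapP [w' hw' hx]; apply/negP => hx'.
have hw'' : w' \in w :: s by rewrite inE hw' orbT.
have e := hd w w' x (mem_head _ _) hw'' hx' hx.
by move: hw; rewrite e hw'.
Qed.

Section Comb.
Variables (T : choiceType) (F : T -> T) (sig : T -> T) (c1 c2 v1 v2 alpha : T) (m k : nat).
Hypotheses
  (hfib : forall x z, F x = F z <-> x = z \/ x = sig z)
  (hsig : forall z, sig z = z <-> z = c1 \/ z = c2)
  (hsurj : forall y, exists x, F x == y)
  (hc12 : c1 <> c2)
  (hv1 : v1 = F c1) (hv2 : v2 = F c2) (hv12 : v1 <> v2) (hFv : F v1 = F v2)
  (halpha : F alpha = alpha) (hm : iter m F v1 = alpha)
  (hmin : forall j, j < m -> iter j F v1 <> alpha)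
  (hm2 : 2 < m) (hmk : m < k).

Definition pre y := let x := xchoose (hsurj y) in
  if sig x == x then [:: x] else [:: x; sig x].

Lemma mem_pre w y : (w \in pre y) = (F w == y).
Proof.
rewrite /pre; set x := xchoose _; have /eqP hx : F x == y := xchooseP (hsurj y).
have e : (F w == y) = (w == x) || (w == sig x).
  rewrite -hx; apply/idP/idP => [/eqP /(iffLR (hfib _ _)) [->|->]|/orP [/eqP ->|/eqP ->]];
    rewrite ?eqxx ?orbT //.
  by apply/eqP/(iffRL (hfib _ _)); right.
case: eqP => hsx; rewrite e !inE //.
by rewrite hsx orbb.
Qed.

Lemma uniq_pre y : uniq (pre y).
Proof.
rewrite /pre; case: eqP => // h /=; rewrite inE andbT eq_sym.
by apply/eqP.
Qed.

Lemma size_pre y : y != v1 -> y != v2 -> size (pre y) = 2.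
Proof.
move=> h1 h2; rewrite /pre; set x := xchoose _.
have /eqP hx : F x == y := xchooseP (hsurj y).
case: eqP => // /hsig [e|e]; exfalso.
  by move: h1; rewrite -hx e hv1 eqxx.
by move: h2; rewrite -hx e hv2 eqxx.
Qed.

Fixpoint preN n y := if n is n'.+1 then flatten [seq pre w | w <- preN n' y] else [:: y].

Lemma mem_preN n x y : (x \in preN n y) = (iter n F x == y).
Proof.
elim: n x => [|n IH] x /=; first by rewrite inE.
apply/flatten_mapP/eqP => [[w hw hx]|hx].
  by move: hw hx; rewrite IH mem_pre -iterS iterSr => /eqP <- /eqP ->.
exists (F x); last by rewrite mem_pre.
by rewrite IH -iterSr iterS hx.
Qed.

Lemma uniq_preN n y : uniq (preN n y).
Proof.
elim: n => [//|n IH] /=; apply: flatten_uniq => //.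
  by move=> w _; apply: uniq_pre.
by move=> w w' x _ _; rewrite !mem_pre => /eqP <- /eqP.
Qed.

Lemma size_preN n y :
  (forall j x, j < n -> iter j F x = y -> x <> v1 /\ x <> v2) -> size (preN n y) = 2 ^ n.
Proof.
elim: n => [//|n IH] h /=.
rewrite size_flatten /shape -map_comp.
have -> : [seq (size \o pre) i | i <- preN n y] = [seq 2 | i <- preN n y].
  apply/eq_in_map => w; rewrite mem_preN => /eqP hw /=.
  have [h1 h2] := h n w (ltnSn n) hw.
  by rewrite size_pre //; apply/eqP.
have -> : sumn [seq 2 | i <- preN n y] = 2 * size (preN n y).
  by elim: (preN n y) => //= w s ->; rewrite mulnS.
rewrite IH ?expnS // => j x hj; apply: (h j x); exact: (ltn_trans hj (ltnSn n)).
Qed.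


Local Notation beta j := (iter j F v1).

Lemma iter_fixp j : iter j F alpha = alpha.
Proof. by elim: j => //= j ->. Qed.

Lemma beta_ge n : m <= n -> beta n = alpha.
Proof. by move=> h; rewrite -(subnK h) iterD hm iter_fixp. Qed.

Lemma beta_per s t : s < t -> beta s = beta t -> m <= s.
Proof.
move=> hst e; set d := t - s.
have hN : forall N, beta (s + N * d) = beta s.
  elim=> [|N IH]; first by rewrite addn0.
  rewrite mulSn addnCA iterD IH -iterD subnK //; exact: ltnW.
have hd : 0 < d by rewrite subn_gt0.
rewrite leqNgt; apply/negP => hs; apply: (hmin hs).
rewrite -(hN m) beta_ge //; nia.
Qed.

Lemma beta_eqE s t : s < m -> (beta s == beta t) = (s == t).
Proof.
move=> hs; case: (ltngtP s t) => h; last by rewrite h !eqxx.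
  by apply/negbTE/eqP => /(beta_per h); rewrite leqNgt hs.
by apply/negbTE/eqP => /esym /(beta_per h) => hm'; have := leq_trans hm' (ltnW h); rewrite leqNgt hs.
Qed.

Lemma v2_beta j : 0 < j -> iter j F v2 = beta j.
Proof. by case: j => // j _; rewrite !iterSr hFv. Qed.

Lemma beta_ne_v2 t : beta t <> v2.
Proof.
move=> e; case: t e => [/= e|t e]; first exact: hv12.
have e' : beta t.+2 = beta 1 by rewrite iterS e -hFv.
have := beta_per (isT : 1 < t.+2) (esym e'); by rewrite leqNgt (ltn_trans _ hm2).
Qed.

Lemma v_ne_c j c : (c = c1 \/ c = c2) -> beta j <> c /\ iter j F v2 <> c.
Proof.
have hb : forall t, beta t <> c1 /\ beta t <> c2.
  move=> t; split => e.
    have e' : beta t.+1 = beta 0 by rewrite iterS e -hv1.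
    by have := beta_per (ltn0Sn t) (esym e'); rewrite leqNgt (ltn_trans _ hm2).
  by apply: (beta_ne_v2 (t := t.+1)); rewrite iterS e hv2.
move=> hc; split; first by case: hc => ->; apply hb.
case: j => [|j]; last by rewrite v2_beta //; case: hc => ->; apply hb.
case: hc => -> /= e.
  have e' : beta 1 = beta 0 by rewrite /= hFv e -hv1.
  by have := beta_per (ltn0Sn 0) (esym e'); rewrite leqNgt (ltn_trans _ hm2).
by apply: (beta_ne_v2 (t := 1)); rewrite /= hFv e -hv2.
Qed.

Lemma npc d c c' : (c = c1 \/ c = c2) -> (c' = c1 \/ c' = c2) -> iter d.+1 F c <> c'.
Proof.
move=> hc hc'; rewrite iterSr; case: hc => ->; rewrite -?hv1 -?hv2;
by have [] := v_ne_c d hc'.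
Qed.

Lemma size_preN_c i c : (c = c1 \/ c = c2) -> size (preN i c) = 2 ^ i.
Proof.
move=> hc; apply: size_preN => j x _ e; have [h1 h2] := v_ne_c j hc.
by split => ex; [apply: h1|apply: h2]; rewrite -ex.
Qed.

Lemma iter_cc i i' x c c' : (c = c1 \/ c = c2) -> (c' = c1 \/ c' = c2) ->
  iter i F x = c -> iter i' F x = c' -> i = i'.
Proof.
move=> hc hc' e e'; case: (ltngtP i i') => // h; exfalso.
  apply: (npc (d := (i' - i).-1) hc hc'); rewrite prednK ?subn_gt0 //.
  by rewrite -e -iterD subnK // ltnW.
apply: (npc (d := (i - i').-1) hc' hc); rewrite prednK ?subn_gt0 //.
by rewrite -e' -iterD subnK // ltnW.
Qed.

Definition blk y i :=
  (if iter (k - i) F c1 == y then preN i c1 else [::]) ++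
  (if iter (k - i) F c2 == y then preN i c2 else [::]).
Definition Ly y := flatten [seq blk y i | i <- iota 0 k].
Definition CritF x := exists2 i, i < k & (iter i F x = c1 \/ iter i F x = c2).

Lemma mem_blk y i x : (x \in blk y i) =
  ((iter (k - i) F c1 == y) && (iter i F x == c1)) ||
  ((iter (k - i) F c2 == y) && (iter i F x == c2)).
Proof.
rewrite /blk mem_cat; case: ifP => _; case: ifP => _;
by rewrite /= ?mem_preN ?in_nil ?orbF.
Qed.

Lemma mem_Ly y x : x \in Ly y <-> CritF x /\ iter k F x = y.
Proof.
split.
  move/flatten_mapP; case=> i; rewrite mem_iota add0n => /andP [_ hi].
  rewrite mem_blk => /orP [/andP [/eqP e1 /eqP e2]|/andP [/eqP e1 /eqP e2]].
    by split; [exists i => //; left|rewrite -(subnK (ltnW hi)) iterD e2].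
  by split; [exists i => //; right|rewrite -(subnK (ltnW hi)) iterD e2].
move=> [[i hi hc] hy]; apply/flatten_mapP; exists i; first by rewrite mem_iota.
have hy' : iter (k - i) F (iter i F x) = y by rewrite -iterD subnK // ltnW.
rewrite mem_blk; case: hc => e; rewrite e in hy'; by rewrite hy' e !eqxx ?orbT.
Qed.

Lemma uniq_Ly y : uniq (Ly y).
Proof.
apply: flatten_uniq; first exact: iota_uniq.
  move=> i _; rewrite /blk cat_uniq; case: ifP => _; case: ifP => _; rewrite /= ?uniq_preN ?andbT //.
    apply/hasPn => x; rewrite !mem_preN => /eqP h1; rewrite h1.
    by apply/eqP => e; apply: hc12.
  by apply/hasPn.
move=> i i' x _ _; rewrite !mem_blk.
move=> /orP [/andP [_ /eqP e]|/andP [_ /eqP e]] /orP [/andP [_ /eqP e']|/andP [_ /eqP e']];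
  apply: (iter_cc _ _ e e'); auto.
Qed.

Lemma size_Ly y : size (Ly y) =
  \sum_(0 <= i < k) (((iter (k - i) F c1 == y) + (iter (k - i) F c2 == y)) * 2 ^ i).
Proof.
rewrite size_flatten /shape -map_comp sumnE big_map /index_iota subn0.
apply: eq_bigr => i _ /=; rewrite /blk size_cat mulnDl.
by congr (_ + _); case: eqP => _; rewrite ?size_preN_c ?mul1n ?mul0n //; auto.
Qed.


Definition gc y i := (((iter (k - i) F c1 == y) + (iter (k - i) F c2 == y)) * 2 ^ i).

Lemma gcE y i : i < k -> gc y i =
  ((beta (k - i.+1) == y) + (if i.+1 < k then beta (k - i.+1) == y else v2 == y)) * 2 ^ i.
Proof.
move=> hi; rewrite /gc.
have e : k - i = (k - i.+1).+1 by lia.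
rewrite e !iterSr -hv1 -hv2; congr ((_ + _) * _).
case: ifP => h; first by rewrite v2_beta // subn_gt0.
by have -> : k - i.+1 = 0 by lia.
Qed.

Lemma size_LyE y : size (Ly y) = \sum_(0 <= i < k) gc y i.
Proof. exact: size_Ly. Qed.

Lemma hk1 : 2 < k.
Proof. exact: ltn_trans hm2 hmk. Qed.

Lemma beta_eqE' t j : j < m -> (beta t == beta j) = (t == j).
Proof. by move=> hj; rewrite eq_sym beta_eqE // eq_sym. Qed.

Lemma beta_eq0 t : (beta t == v1) = (t == 0).
Proof. by rewrite -[X in _ == X]/(beta 0) beta_eqE' // (ltn_trans _ hm2). Qed.

Lemma count_v1 : size (Ly v1) = 2 ^ (k - 1).
Proof.
rewrite size_LyE.
rewrite (eq_big_nat _ _ (F2 := fun i => (i == k.-1) * 2 ^ i)); last first.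
  move=> i /andP [_ hi]; rewrite gcE // beta_eq0.
  case: ifP => h.
    have -> : (k - i.+1 == 0) = false by apply/negbTE; rewrite -lt0n subn_gt0.
    have -> : (i == k.-1) = false by apply/negbTE; lia.
    by [].
  have -> : v2 == v1 = false by apply/negbTE/eqP => e; apply: hv12.
  have -> : i == k.-1 by apply/eqP; lia.
  by have -> : k - i.+1 = 0 by lia.
have hk : k.-1 < k by rewrite prednK // (ltn_trans _ hk1).
by rewrite sum_single hk mul1n subn1.
Qed.


Lemma beta_v2F t : (beta t == v2) = false.
Proof. by apply/negbTE/eqP/beta_ne_v2. Qed.

Lemma v2_betaF t : (v2 == beta t) = false.
Proof. by rewrite eq_sym beta_v2F. Qed.

Lemma hk0 : 0 < k.
Proof. exact: ltn_trans _ hk1. Qed.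

Lemma count_v2 : size (Ly v2) = 2 ^ (k - 1).
Proof.
rewrite size_LyE.
rewrite (eq_big_nat _ _ (F2 := fun i => (i == k.-1) * 2 ^ i)); last first.
  move=> i /andP [_ hi]; rewrite gcE // beta_v2F.
  case: ifP => h; first by have -> : (i == k.-1) = false by apply/negbTE; lia.
  by rewrite eqxx; have -> : i == k.-1 by apply/eqP; lia.
have hk : k.-1 < k by rewrite prednK // hk0.
by rewrite sum_single hk mul1n subn1.
Qed.

Lemma count_bj j : 0 < j < m -> j < k ->
  size (Ly (beta j)) = \sum_(0 <= i < k) ((i == k - j.+1) * (2 * 2 ^ i)).
Proof.
move=> /andP [hj0 hjm] hjk; rewrite size_LyE; apply: eq_big_nat => i /andP [_ hi].
rewrite gcE // beta_eqE' //.
have E : (k - i.+1 == j) = (i == k - j.+1) by apply/eqP/eqP; lia.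
rewrite E; case: ifP => h; first by case: (i == _); rewrite /= ?mul0n ?mul1n ?mul2n ?addnn.
rewrite v2_betaF; have -> : (i == k - j.+1) = false by apply/negbTE; lia.
by [].
Qed.

Lemma count_b1 : size (Ly (beta 1)) = 2 ^ (k - 1).
Proof.
rewrite count_bj ?(ltn_trans _ hm2) ?(ltn_trans _ hk1) // sum_single.
have -> : k - 2 < k by lia.
rewrite mul1n -expnS; congr (_ ^ _); have := hk1; lia.
Qed.

Lemma count_bj' j : 2 <= j <= m - 1 -> size (Ly (beta j)) = 2 ^ (k - j).
Proof.
move=> /andP [h2 hj]; have hjm : j < m by lia.
rewrite count_bj; first last.
- by lia.
- by apply/andP; split; lia.
rewrite sum_single; have -> : k - j.+1 < k by lia.
rewrite mul1n -expnS; congr (_ ^ _); lia.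
Qed.

Lemma beta_alpha t : (beta t == alpha) = (m <= t).
Proof.
case: (leqP m t) => h; first by rewrite beta_ge ?eqxx.
by apply/negbTE/eqP; apply: hmin.
Qed.

Lemma count_alpha : size (Ly alpha) = 2 ^ (k - (m - 1)) - 2.
Proof.
rewrite size_LyE.
rewrite (eq_big_nat _ _ (F2 := fun i => (i < k - m) * (2 * 2 ^ i))); last first.
  move=> i /andP [_ hi]; rewrite gcE // beta_alpha.
  have E : (m <= k - i.+1) = (i < k - m) by apply/idP/idP; lia.
  rewrite E; case: ifP => h; first by case: (i < _); rewrite /= ?mul0n ?mul1n ?mul2n ?addnn.
  rewrite -hm v2_betaF; have -> : (i < k - m) = false by apply/negbTE; lia.
  by [].
rewrite sum_lt ?leq_subr // -big_distrr /=.
have := sum_geom (k - m); set X := \sum_(0 <= i < k - m) 2 ^ i => hX.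
have -> : k - (m - 1) = (k - m).+1 by lia.
rewrite expnS -hX; lia.
Qed.

Lemma count_other y : y <> v1 -> y <> v2 -> y <> beta 1 -> size (Ly y) < 2 ^ (k - 1).
Proof.
move=> h1 h2 h3; rewrite size_LyE.
apply: (@leq_ltn_trans (\sum_(0 <= i < k) ((i < k - 2) * (2 * 2 ^ i)))).
  rewrite big_nat_cond [X in _ <= X]big_nat_cond.
  apply: leq_sum => i /andP [/andP [_ hi] _]; rewrite gcE //.
  case: (ltngtP i (k - 2)) => hi2.
  - rewrite mul1n leq_mul2r; apply/orP; right.
    by case: (beta (k - i.+1) == y); case: ifP => _; case: (v2 == y).
  - have -> : i = k.-1 by have := hk1; lia.
    have -> : k - k.-1.+1 = 0 by lia.
    rewrite prednK ?hk0 // ltnn /=.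
    have -> : (v1 == y) = false by apply/negbTE/eqP => e; apply: h1.
    by have -> : (v2 == y) = false by apply/negbTE/eqP => e; apply: h2.
  - have -> : k - i.+1 = 1 by have := hk1; lia.
    have -> : (i.+1 < k) by have := hk1; lia.
    by have -> : (beta 1 == y) = false by apply/negbTE/eqP => e; apply: h3.
rewrite sum_lt ?leq_subr // -big_distrr /=.
have := sum_geom (k - 2); set X := \sum_(0 <= i < k - 2) 2 ^ i => hX.
have -> : k - 1 = (k - 2).+1 by have := hk1; lia.
rewrite expnS -hX; lia.
Qed.

Lemma comb_final : exists L : T -> seq T,
  [/\ forall y, uniq (L y),
      forall y x, x \in L y <-> (exists2 i, i < k & (iter i F x = c1 \/ iter i F x = c2)) /\ iter k F x = y,
      forall y, size (L y) = 2 ^ (k - 1) <-> [\/ y = v1, y = v2 | y = F v1],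
      forall j, 2 <= j <= m - 1 -> size (L (iter j F v1)) = 2 ^ (k - j) &
      size (L alpha) = 2 ^ (k - (m - 1)) - 2].
Proof.
exists Ly; split.
- exact: uniq_Ly.
- exact: mem_Ly.
- move=> y; split.
    move=> h; case: (boolP (y == v1)) => [/eqP|/eqP h1]; first by constructor 1.
    case: (boolP (y == v2)) => [/eqP|/eqP h2]; first by constructor 2.
    case: (boolP (y == F v1)) => [/eqP|/eqP h3]; first by constructor 3.
    by have := count_other h1 h2 h3; rewrite h ltnn.
  by case=> ->; [exact: count_v1|exact: count_v2|exact: count_b1].
- exact: count_bj'.
- exact: count_alpha.
Qed.

End Comb.

Local Open Scope ring_scope.

Unset Implicit Arguments. Set Strict Implicit. Set Printing Implicit Defensive.

Lemma has_exactly_iff (T : eqType) n (P : T -> Prop) (s : seq T) :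
  uniq s -> (forall x, P x <-> x \in s) -> (has_exactly n P <-> n = size s).
Proof.
move=> hu hP; split.
  move=> [s' [hu' hsz hP']]; rewrite -hsz; apply: perm_size; apply: uniq_perm => // x.
  by apply/idP/idP => h; [apply/hP/hP'|apply/hP'/hP].
by move=> ->; exists s; split.
Qed.
Arguments has_exactly_iff {T} n {P s}.

Theorem mainTheorem19 (R : realType) (f : hmap (complex R))
  (c1 c2 v1 v2 alpha : sphere (complex R)) (m k : nat) :
  is_quadratic f ->
  c1 <> c2 -> critical f c1 -> critical f c2 ->
  v1 = heval f c1 -> v2 = heval f c2 -> v1 <> v2 ->
  heval f v1 = heval f v2 ->
  heval f alpha = alpha ->
  iter m (heval f) v1 = alpha ->
  (forall j, (j < m)%N -> iter j (heval f) v1 <> alpha) ->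
  (2 < m)%N -> (m < k)%N ->
  [/\ (forall z : sphere (complex R),
         has_exactly (2 ^ (k - 1))
           (fun x => critical (hiter k f) x /\ iter k (heval f) x = z)
         <-> [\/ z = v1, z = v2 | z = heval f v1]),
      (forall j, (2 <= j <= m - 1)%N ->
         has_exactly (2 ^ (k - j))
           (fun x => critical (hiter k f) x /\
                     iter k (heval f) x = iter j (heval f) v1)) &
      has_exactly (2 ^ (k - (m - 1)) - 2)
        (fun x => critical (hiter k f) x /\ iter k (heval f) x = alpha)].
Proof.
move=> [hdeg2 hrat] hc12 hcr1 hcr2 hv1 hv2 hv12 hFv halpha hm hmin hm2 hmk.
have hcrit : forall w, critical f w <-> w = c1 \/ w = c2.
  move=> w; split; first exact: crit_two hdeg2 hrat c1 c2 w hc12 hcr1 hcr2.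
  by case=> ->.
have hfib := fiberE hdeg2 hrat.
have hsig : forall z, sigf f z = z <-> z = c1 \/ z = c2.
  by move=> z; rewrite (sig_fix hdeg2 hrat) hcrit.
have hsurj : forall y, exists x, heval f x == y.
  by move=> y; have [x hx] := surj hdeg2 hrat y; exists x; apply/eqP.
have [L [hu hmem hi hii hiii]] := comb_final hfib hsig hsurj hc12 hv1 hv2 hv12 hFv halpha
  hm hmin hm2 hmk.
have hd : (0 < hdeg f)%N by rewrite hdeg2.
have [hs1 hs2 hn] := hrat.
have hP : forall y x, (critical (hiter k f) x /\ iter k (heval f) x = y) <-> x \in L y.
  move=> y x; rewrite hmem; split => [[hc ->]|[[i hj hc] ->]]; split => //.
    have [i hj hc'] := iffLR (critical_iter hd (conj hs1 hs2) hn k x) hc.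
    by exists i => //; apply/hcrit.
  by apply/(critical_iter hd (conj hs1 hs2) hn k x); exists i => //; apply/hcrit.
split.
- by move=> z; rewrite (has_exactly_iff _ (hu z) (hP z)) -hi; split => ->.
- by move=> j hj; apply/(has_exactly_iff _ (hu _) (hP _)); rewrite hii.
- by apply/(has_exactly_iff _ (hu _) (hP _)); rewrite hiii.
Qed.
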